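(* Let $\tilde{\mathfrak g}$ be a real solvable Lie algebra with a metric $\langle,\rangle$ and a standard decomposition $\tilde{\mathfrak g}=\mathfrak g\oplus^\perp\mathfrak a$. Let $e_1,\dots,e_k$ be an orthonormal basis of $\mathfrak a$, $\langle e_s,e_r\rangle=\epsilon_s\delta_{sr}$ with $\epsilon_s=\pm1$, and let $\phi_s\in\operatorname{Der}\mathfrak g$ be defined by $[v,e_s]=\phi_s(v)$ for $v\in\mathfrak g$, with $\phi_s^*$ its adjoint with respect to the restriction of $\langle,\rangle$ to $\mathfrak g$. Let $\widetilde{\operatorname{ric}}$ be the Ricci tensor of $\tilde{\mathfrak g}$ and $\operatorname{ric}$ the Ricci tensor of $\mathfrak g$ with the restricted metric. Then for all $v,w\in\mathfrak g$ and all $s,r$: $\widetilde{\operatorname{ric}}(v,w)=\operatorname{ric}(v,w)+\sum_s\Bigl(\frac12\epsilon_s\langle[\phi_s,\phi_s^*](v),w\rangle-\frac12\epsilon_s\langle(\phi_s+\phi_s^* )(v),w\rangle\operatorname{Tr}\phi_s\Bigr)$, $\widetilde{\operatorname{ric}}(v,e_s)=\frac12\langle\operatorname{ad}v,\phi_s\rangle$, $\widetilde{\operatorname{ric}}(e_s,e_r)=-\frac12\langle\phi_s,\phi_r\rangle-\frac12\operatorname{Tr}(\phi_s\circ\phi_r)$, where $\operatorname{ad}v$ denotes the adjoint action of $v$ on $\mathfrak g$, and for endomorphisms $f,g$ of $\mathfrak g$, $\langle f,g\rangle=\sum_i\eta_i\langle f(u_i),g(u_i)\rangle$ for any orthonormal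 basis $u_i$ of $\mathfrak g$ with $\langle u_i,u_i\rangle=\eta_i=\pm1$.
   Context: A metric on a Lie algebra is a nondegenerate symmetric bilinear form, possibly indefinite; the Ricci tensor is that of the corresponding left-invariant pseudo-Riemannian metric on the simply connected Lie group, evaluated at the identity. A standard decomposition of a metric Lie algebra $\tilde{\mathfrak g}$ is a decomposition $\tilde{\mathfrak g}=\mathfrak g\oplus^\perp\mathfrak a$ as an orthogonal direct sum of vector spaces, where $\mathfrak g$ is a nilpotent ideal and $\mathfrak a$ is an abelian subalgebra. *)

(* Defs.v *)
From HB Require Import structures.
From mathcomp Require Import all_boot all_order all_algebra.
From mathcomp Require Import reals.
From Stdlib Require Import ClassicalEpsilon.
Set Implicit Arguments. Unset Strict Implicit. Unset Printing Implicit Defensive.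
Import Order.TTheory GRing.Theory Num.Theory.
Local Open Scope ring_scope.

Section LieMetric.
Variables (R : realType) (V : vectType R).

Definition is_lie_bracket (br : V -> V -> V) : Prop :=
  [/\ (forall (a : R) (x y z : V), br (a *: x + y) z = a *: br x z + br y z),
      (forall x y : V, br x y = - br y x) &
      (forall x y z : V, br x (br y z) + br y (br z x) + br z (br x y) = 0)].

Definition is_metric (gm : V -> V -> R) : Prop :=
  [/\ (forall (a : R) (x y z : V), gm (a *: x + y) z = a * gm x z + gm y z),
      (forall x y : V, gm x y = gm y x) &
      (forall x : V, (forall y : V, gm x y = 0) -> x = 0)].

Definition bracket_span (br : V -> V -> V) (U W : {vspace V}) : {vspace V} :=
  <<[seq br x y | x <- (vbasis U : seq V), y <- (vbasis W : seq V)]>>%VS.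

Definition lie_subalgebra (br : V -> V -> V) (U : {vspace V}) : Prop :=
  forall x y, x \in U -> y \in U -> br x y \in U.

Definition lie_ideal (br : V -> V -> V) (U : {vspace V}) : Prop :=
  forall x y, x \in U -> br x y \in U.

Definition abelian_subalgebra (br : V -> V -> V) (U : {vspace V}) : Prop :=
  forall x y, x \in U -> y \in U -> br x y = 0.

Definition solvable_lie (br : V -> V -> V) (U : {vspace V}) : Prop :=
  exists n, iter n (fun W => bracket_span br W W) U = 0%VS.

Definition nilpotent_lie (br : V -> V -> V) (U : {vspace V}) : Prop :=
  exists n, iter n (fun W => bracket_span br U W) U = 0%VS.

(* Levi-Civita connection of the left-invariant metric on the Lie algebra U
   (bracket and metric restricted to U), via the Koszul formula
   2<nabla_X Y, Z> = <[X,Y],Z> - <[Y,Z],X> + <[Z,X],Y>. *)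
Definition lc_nabla (br : V -> V -> V) (gm : V -> V -> R) (U : {vspace V})
  (X Y : V) : V :=
  epsilon (inhabits (0 : V)) (fun Z => Z \in U /\
    forall W, W \in U ->
      2 * gm Z W = gm (br X Y) W - gm (br Y W) X + gm (br W X) Y).

Definition lc_curv (br : V -> V -> V) (gm : V -> V -> R) (U : {vspace V})
  (X Y Z : V) : V :=
  lc_nabla br gm U X (lc_nabla br gm U Y Z) - lc_nabla br gm U Y (lc_nabla br gm U X Z)
  - lc_nabla br gm U (br X Y) Z.

Definition vtrace (U : {vspace V}) (f : V -> V) : R :=
  \sum_(i < \dim U) coord (vbasis U) i (f (tnth (vbasis U) i)).

Definition ricci (br : V -> V -> V) (gm : V -> V -> R) (U : {vspace V})
  (Y Z : V) : R :=
  vtrace U (fun X => lc_curv br gm U X Y Z).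

End LieMetric.

(* Main.v *)
Require Import Defs.
From HB Require Import structures.
From mathcomp Require Import all_boot all_order all_algebra.
From mathcomp Require Import reals.
From mathcomp Require Import ring lra.
From Stdlib Require Import ClassicalEpsilon.
Import Order.TTheory GRing.Theory Num.Theory.
Local Open Scope ring_scope.
Set Implicit Arguments. Unset Strict Implicit.

Section Lin.
Variables (R : realType) (V : vectType R).

Definition linV (f : V -> V) := forall (a : R) x y, f (a *: x + y) = a *: f x + f y.
Definition linR (f : V -> R) := forall (a : R) x y, f (a *: x + y) = a * f x + f y.

Section LV.
Variables (f : V -> V) (Hf : linV f).
Lemma linV0 : f 0 = 0.
Proof. have h := Hf 1 0 0; rewrite !scale1r !addr0 in h.
by apply: (addrI (f 0)); rewrite addr0 -h. Qed.
Lemma linVD x y : f (x + y) = f x + f y.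
Proof. by have := Hf 1 x y; rewrite !scale1r. Qed.
Lemma linVZ a x : f (a *: x) = a *: f x.
Proof. by rewrite -[a *: x]addr0 Hf linV0 addr0. Qed.
Lemma linVN x : f (- x) = - f x.
Proof. by rewrite -scaleN1r linVZ scaleN1r. Qed.
Lemma linVB x y : f (x - y) = f x - f y.
Proof. by rewrite linVD linVN. Qed.
Lemma linV_sum I r (P : pred I) F : f (\sum_(i <- r | P i) F i) = \sum_(i <- r | P i) f (F i).
Proof. exact: (big_morph f linVD linV0). Qed.
End LV.

Section LR.
Variables (f : V -> R) (Hf : linR f).
Lemma linR0 : f 0 = 0.
Proof. have h := Hf 1 0 0; rewrite !scale1r !mul1r !addr0 in h.
by apply: (addrI (f 0)); rewrite addr0 -h. Qed.
Lemma linRD x y : f (x + y) = f x + f y.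
Proof. by have := Hf 1 x y; rewrite scale1r mul1r. Qed.
Lemma linRZ a x : f (a *: x) = a * f x.
Proof. by rewrite -[a *: x]addr0 Hf linR0 addr0. Qed.
Lemma linRN x : f (- x) = - f x.
Proof. by rewrite -scaleN1r linRZ mulN1r. Qed.
Lemma linRB x y : f (x - y) = f x - f y.
Proof. by rewrite linRD linRN. Qed.
Lemma linR_sum I r (P : pred I) F : f (\sum_(i <- r | P i) F i) = \sum_(i <- r | P i) f (F i).
Proof. exact: (big_morph f linRD linR0). Qed.
End LR.

Lemma vtrace_family (U : {vspace V}) (I : finType) (b : I -> V) (beta : I -> V -> R)
  (f : V -> V) :
  (forall i, b i \in U) -> (forall i, linR (beta i)) ->
  (forall x, x \in U -> x = \sum_i beta i x *: b i) ->
  linV f -> (forall x, x \in U -> f x \in U) ->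
  vtrace U f = \sum_i beta i (f (b i)).
Proof.
move=> bU lb exp lf fU; rewrite /vtrace.
have vbU j : tnth (vbasis U) j \in U by apply: vbasis_mem; exact: mem_tnth.
transitivity (\sum_(j < \dim U) \sum_i beta i (tnth (vbasis U) j) *
                coord (vbasis U) j (f (b i))).
  apply: eq_bigr => j _.
  rewrite {1}(exp _ (vbU j)) (linV_sum lf) linear_sum; apply: eq_bigr => i _.
  by rewrite (linVZ lf) linearZ.
rewrite exchange_big /=; apply: eq_bigr => i _.
rewrite {2}(coord_vbasis (fU _ (bU i))) (linR_sum (lb i)); apply: eq_bigr => j _.
by rewrite (linRZ (lb i)) mulrC (tnth_nth 0).
Qed.

End Lin.
Section LieBasic.
Variables (R : realType) (V : vectType R) (br : V -> V -> V) (gm : V -> V -> R).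
Hypotheses (Hbr : is_lie_bracket br) (Hgm : is_metric gm).

Lemma brL y : linV (fun x => br x y).
Proof. by case: Hbr => H _ _ a x z; apply: H. Qed.
Lemma brA x y : br x y = - br y x.
Proof. by case: Hbr. Qed.
Lemma brR x : linV (br x).
Proof. by move=> a y z; rewrite brA (brL x) 2!(brA x) scalerN opprD. Qed.
Lemma brJ x y z : br x (br y z) + br y (br z x) + br z (br x y) = 0.
Proof. by case: Hbr. Qed.
Lemma brxx x : br x x = 0.
Proof.
have h : br x x + br x x = 0 by rewrite {1}brA addNr.
have : (2%:R : R) *: br x x = 0 by rewrite scaler_nat mulr2n.
by move/eqP; rewrite scaler_eq0 pnatr_eq0 /= => /eqP.
Qed.

Lemma gmL y : linR (fun x => gm x y).
Proof. by case: Hgm => H _ _ a x z; apply: H. Qed.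
Lemma gmC x y : gm x y = gm y x.
Proof. by case: Hgm. Qed.
Lemma gmR x : linR (gm x).
Proof. by move=> a y z; rewrite gmC (gmL x) 2!(gmC x). Qed.

Definition Kz X Y W := gm (br X Y) W - gm (br Y W) X + gm (br W X) Y.

Lemma KzL Y W : linR (fun X => Kz X Y W).
Proof.
move=> a X X'; rewrite /Kz (brL Y) (gmL W) (gmR (br Y W)) (brR W) (gmL Y).
ring.
Qed.
Lemma KzM X W : linR (fun Y => Kz X Y W).
Proof.
move=> a Y Y'; rewrite /Kz (brR X) (gmL W) (brL W) (gmL X) (gmR (br W X)).
ring.
Qed.
Lemma KzR X Y : linR (Kz X Y).
Proof.
move=> a W W'; rewrite /Kz (gmR (br X Y)) (brR Y) (gmL X) (brL X) (gmL Y).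
ring.
Qed.

Section Nabla.
Variables (U : {vspace V}) (I : finType) (b : I -> V) (sg : I -> R).
Hypotheses (HbU : forall i, b i \in U)
  (Hexp : forall x, x \in U -> x = \sum_i (sg i * gm x (b i)) *: b i).

Lemma nondegU x : x \in U -> (forall w, w \in U -> gm x w = 0) -> x = 0.
Proof.
move=> xU h; rewrite (Hexp xU) big1 // => i _.
by rewrite h // mulr0 scale0r.
Qed.

Lemma nabla_ex X Y : exists Z, Z \in U /\
  forall W, W \in U -> 2 * gm Z W = gm (br X Y) W - gm (br Y W) X + gm (br W X) Y.
Proof.
exists (\sum_i (sg i * (Kz X Y (b i) / 2)) *: b i); split.
  by apply: rpred_sum => i _; apply: rpredZ.
move=> W WU; rewrite -/(Kz X Y W) {2}(Hexp WU) (linR_sum (KzR X Y)).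
rewrite (linR_sum (gmL W)) mulr_sumr; apply: eq_bigr => i _.
rewrite (linRZ (gmL W)) (linRZ (KzR X Y)) gmC; field.
by []. Qed.

Notation nab := (lc_nabla br gm U).

Lemma nablaP X Y : nab X Y \in U /\
  forall W, W \in U -> 2 * gm (nab X Y) W = Kz X Y W.
Proof.
rewrite /lc_nabla; set P := (fun Z => _).
have : exists Z, P Z by apply: nabla_ex.
by move/(epsilon_spec (inhabits 0)).
Qed.

Lemma nablaU X Y : nab X Y \in U. Proof. by case: (nablaP X Y). Qed.
Lemma nablaK X Y W : W \in U -> 2 * gm (nab X Y) W = Kz X Y W.
Proof. by case: (nablaP X Y) => _; apply. Qed.

Lemma nabla_uniq X Y Z : Z \in U -> (forall W, W \in U -> 2 * gm Z W = Kz X Y W) ->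
  nab X Y = Z.
Proof.
move=> ZU HZ; apply/eqP; rewrite -subr_eq0; apply/eqP/nondegU.
  by rewrite rpredB // nablaU.
move=> W WU; rewrite (linRB (gmL W)).
have : 2 * (gm (nab X Y) W - gm Z W) = 0 by rewrite mulrBr nablaK // HZ // subrr.
by move/eqP; rewrite mulf_eq0 pnatr_eq0 /= => /eqP.
Qed.

Lemma nablaL Y : linV (fun X => nab X Y).
Proof.
move=> a X X'; apply: nabla_uniq.
  by rewrite rpredD // ?rpredZ // nablaU.
move=> W WU; rewrite (linRD (gmL W)) (linRZ (gmL W)) mulrDr mulrCA !nablaK //.
by rewrite (KzL Y W).
Qed.

Lemma nablaR X : linV (nab X).
Proof.
move=> a Y Y'; apply: nabla_uniq.
  by rewrite rpredD // ?rpredZ // nablaU.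
move=> W WU; rewrite (linRD (gmL W)) (linRZ (gmL W)) mulrDr mulrCA !nablaK //.
by rewrite (KzM X W).
Qed.

Lemma vec6 (a : R) (A B C D E F : V) :
  (a *: A + B) - (a *: C + D) - (a *: E + F) = a *: (A - C - E) + (B - D - F).
Proof. rewrite !opprD !addrA !scalerBr ?addrA.
rewrite (addrAC (a *: A) B) (addrAC (a *: A - a *: C + B) (- D)).
by rewrite (addrAC (a *: A - a *: C) B).
Qed.

Lemma curvL Y Z : linV (fun X => lc_curv br gm U X Y Z).
Proof.
move=> a X X'; rewrite /lc_curv (nablaL (nab Y Z)) (nablaL Z).
by rewrite (nablaR Y) (brL Y) (nablaL Z) vec6.
Qed.

Lemma trace_U f : linV f -> (forall x, x \in U -> f x \in U) ->
  vtrace U f = \sum_i sg i * gm (f (b i)) (b i).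
Proof.
move=> lf fU; apply: (vtrace_family (beta := fun i x => sg i * gm x (b i))) => //.
move=> i a x y; rewrite (gmL (b i)); ring.
Qed.

End Nabla.
End LieBasic.
Section Nil.
Variables (R : realType) (V : vectType R) (br : V -> V -> V).
Hypothesis (Hbr : is_lie_bracket br).
Variable g : {vspace V}.

Lemma bs_mem (U W : {vspace V}) x y : x \in U -> y \in W -> br x y \in bracket_span br U W.
Proof.
move=> xU yW.
rewrite (coord_vbasis xU) (linV_sum (brL Hbr _)); apply: rpred_sum => i _.
rewrite (linVZ (brL Hbr _)); apply: rpredZ.
rewrite (coord_vbasis yW) (linV_sum (brR Hbr _)); apply: rpred_sum => j _.
rewrite (linVZ (brR Hbr _)); apply: rpredZ.
by apply: memv_span; apply: allpairs_f; apply: mem_nth; rewrite size_tuple.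
Qed.

Lemma bs_sub (U W Z : {vspace V}) :
  (forall x y, x \in U -> y \in W -> br x y \in Z) -> (bracket_span br U W <= Z)%VS.
Proof.
move=> H; apply/span_subvP => z /allpairsP [[x y] [/= xs yt ->]].
by apply: H; apply: vbasis_mem.
Qed.

Definition Cs j := iter j (fun W => bracket_span br g W) g.

Hypothesis Hid : lie_ideal br g.

Lemma Cs_g j : (Cs j <= g)%VS.
Proof.
case: j => [|j]; first exact: subvv.
by rewrite /Cs iterS; apply: bs_sub => x y xg _; apply: Hid.
Qed.

Lemma Cs_dec j : (Cs j.+1 <= Cs j)%VS.
Proof.
elim: j => [|j IH]; first exact: Cs_g.
rewrite /Cs iterS; apply: bs_sub => x y xg yC.
by apply: bs_mem => //; apply: (subvP IH).
Qed.

Lemma lin_span (D : V -> V) (lD : linV D) (X : seq V) (Z : {vspace V}) x :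
  x \in <<X>>%VS -> (forall y, y \in X -> D y \in Z) -> D x \in Z.
Proof.
move=> xX H; rewrite (coord_span (X := in_tuple X) xX) (linV_sum lD).
apply: rpred_sum => i _; rewrite (linVZ lD); apply: rpredZ; apply: H.
by apply: mem_nth; exact: ltn_ord.
Qed.

Lemma Cs_D (D : V -> V) (lD : linV D) (Dg : forall x, x \in g -> D x \in g)
  (Dder : forall x z, x \in g -> z \in g -> D (br x z) = br (D x) z + br x (D z)) j x :
  x \in Cs j -> D x \in Cs j.
Proof.
elim: j x => [|j IH] x; first exact: Dg.
rewrite /Cs iterS -/(Cs j) => xC; apply: (lin_span lD xC).
move=> z /allpairsP [[x0 y0] [/= xs yt ->]].
have x0g := vbasis_mem xs; have y0C := vbasis_mem yt.
have y0g := subvP (Cs_g j) _ y0C.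
rewrite Dder //; apply: rpredD; apply: bs_mem => //; first exact: Dg.
exact: IH.
Qed.

Lemma trace_sub (U W : {vspace V}) f : (W <= U)%VS -> linV f ->
  (forall x, x \in U -> f x \in W) -> vtrace U f = vtrace W f.
Proof.
move=> WU lf fUW.
pose W' := (U :\: W)%VS.
have pi1W w : w \in W -> addv_pi1 U W w = 0.
  move=> wW; have := addv_pi1_pi2 (subvP (addvSr U W) _ wW).
  by rewrite addv_pi2_id // => /(canRL (addrK w)); rewrite subrr.
pose b (i : 'I_(\dim W) + 'I_(\dim W')) :=
  match i with inl i => (vbasis W)`_i | inr i => (vbasis W')`_i end.
pose beta (i : 'I_(\dim W) + 'I_(\dim W')) x :=
  match i with inl i => coord (vbasis W) i (addv_pi2 U W x) | inr i => coord (vbasis W') i (addv_pi1 U W x) end.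
have vbW (i : 'I_(\dim W)) : (vbasis W)`_i \in W.
  by apply: vbasis_mem; apply: mem_nth; rewrite size_tuple.
rewrite (@vtrace_family _ _ U _ b beta) //.
- rewrite big_sumType /= [X in _ + X]big1 ?addr0; last first.
    move=> i _; rewrite pi1W ?linear0 //. apply: fUW. rewrite (subvP (diffvSl U W)) //.
    apply: vbasis_mem; apply: mem_nth; rewrite size_tuple //.
  rewrite /vtrace; apply: eq_bigr => i _.
  by rewrite addv_pi2_id ?(tnth_nth 0) // fUW // (subvP WU).
- case=> i /=; first by rewrite (subvP WU).
  by rewrite (subvP (diffvSl U W)) //; apply: vbasis_mem; apply: mem_nth; rewrite size_tuple.
- by case=> i a x y /=; rewrite linearP /= linearD linearZ.
- move=> x xU; rewrite big_sumType /=.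
  rewrite -{1}(addv_pi1_pi2 (subvP (addvSl U W) _ xU)) addrC; congr (_ + _).
    exact: (coord_vbasis (memv_pi _ _ x)).
  exact: (coord_vbasis (memv_pi2 U W x)).
- by move=> x xU; rewrite (subvP WU) // fUW.
Qed.

Lemma trace_zero (f : V -> V) : vtrace 0%VS f = 0.
Proof. by rewrite /vtrace big1 // => -[i Hi]; exfalso; move: Hi; rewrite dimv0. Qed.

Lemma trace_nil (D : V -> V) (lD : linV D)
  (DC : forall j x, x \in Cs j -> D x \in Cs j) y :
  nilpotent_lie br g -> y \in g -> vtrace g (fun x => D (br y x)) = 0.
Proof.
move=> [n Hn] yg.
have lF : linV (fun x => D (br y x)) by move=> a x z; rewrite (brR Hbr y) lD.
suff H : forall j, vtrace g (fun x => D (br y x)) = vtrace (Cs j) (fun x => D (br y x)).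
  by rewrite (H n) /Cs Hn trace_zero.
elim=> [//|j IH]; rewrite IH; apply: trace_sub => //; first exact: Cs_dec.
by move=> x xC; apply: DC; apply: bs_mem.
Qed.

End Nil.
Lemma sum_delta (R : realType) (I : finType) (F G : I -> R) j :
  \sum_i F i * (if i == j then G i else 0) = F j * G j.
Proof.
rewrite (bigD1 j) //= eqxx big1 ?addr0 // => i /negPf ->; by rewrite mulr0.
Qed.

Lemma exp_onb (R : realType) (V : vectType R) (gm : V -> V -> R) (Hgm : is_metric gm)
  (U : {vspace V}) n (X : n.-tuple V) (sg : 'I_n -> R) :
  basis_of U X -> (forall i, sg i = 1 \/ sg i = -1) ->
  (forall i j, gm (tnth X i) (tnth X j) = if i == j then sg i else 0) ->
  forall x, x \in U -> x = \sum_i (sg i * gm x (tnth X i)) *: tnth X i.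
Proof.
move=> HB Hs Ho x xU.
have ex := coord_basis HB xU.
have c j : sg j * gm x (tnth X j) = coord X j x.
  rewrite {1}ex (linR_sum (gmL Hgm _)).
  rewrite (eq_bigr (fun i => coord X i x * (if i == j then sg i else 0))).
    by rewrite sum_delta mulrCA; case: (Hs j) => ->; rewrite ?mulrNN !mulr1.
  by move=> i _; rewrite (linRZ (gmL Hgm _)) -(tnth_nth 0) Ho.
rewrite {1}ex; apply: eq_bigr => i _; by rewrite c (tnth_nth 0).
Qed.

Section Main.
Variables (R : realType) (V : vectType R)
  (br : V -> V -> V) (gm : V -> V -> R) (g a : {vspace V})
  (k : nat) (e : k.-tuple V) (eps : 'I_k -> R)
  (phis : 'I_k -> V -> V)
  (m : nat) (u : m.-tuple V) (eta : 'I_m -> R).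
Hypotheses (Hbr : is_lie_bracket br) (Hgm : is_metric gm)
  (Hid : lie_ideal br g) (Hnil : nilpotent_lie br g)
  (Hab : abelian_subalgebra br a)
  (Hfull : (g + a)%VS = fullv)
  (Horth : forall v w, v \in g -> w \in a -> gm v w = 0)
  (Hbe : basis_of a e)
  (Heps : forall s, eps s = 1 \/ eps s = -1)
  (Hee : forall s r, gm (tnth e s) (tnth e r) = if s == r then eps s else 0)
  (Hphg : forall s v, v \in g -> phis s v \in g)
  (Hadj : forall s v w, v \in g -> w \in g ->
     gm (br v (tnth e s)) w = gm v (phis s w))
  (Hbu : basis_of g u)
  (Heta : forall i, eta i = 1 \/ eta i = -1)
  (Huu : forall i j, gm (tnth u i) (tnth u j) = if i == j then eta i else 0).

Local Notation ug i := (tnth u i).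
Local Notation es s := (tnth e s).
Local Notation ph s v := (br v (tnth e s)).
Local Notation Nn := (lc_nabla br gm fullv).
Local Notation Dn := (lc_nabla br gm g).
Local Notation K := (Kz br gm).

Lemma ug_g i : ug i \in g. Proof. by apply: (basis_mem Hbu); apply: mem_tnth. Qed.
Lemma es_a s : es s \in a. Proof. by apply: (basis_mem Hbe); apply: mem_tnth. Qed.
Lemma eps2 s : eps s * eps s = 1. Proof. by case: (Heps s) => ->; rewrite ?mulrNN mulr1. Qed.
Lemma eta2 i : eta i * eta i = 1. Proof. by case: (Heta i) => ->; rewrite ?mulrNN mulr1. Qed.
Lemma orth_ag v w : v \in g -> w \in a -> gm w v = 0.
Proof. by move=> ? ?; rewrite (gmC Hgm) Horth. Qed.
Lemma gm_ge v s : v \in g -> gm v (es s) = 0. Proof. by move=> ?; rewrite Horth ?es_a. Qed.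
Lemma gm_eg v s : v \in g -> gm (es s) v = 0. Proof. by move=> ?; rewrite orth_ag ?es_a. Qed.
Lemma br_gl x y : x \in g -> br x y \in g. Proof. exact: Hid. Qed.
Lemma br_gr x y : y \in g -> br x y \in g.
Proof. by move=> ?; rewrite (brA Hbr) rpredN br_gl. Qed.
Lemma br_ee s r : br (es s) (es r) = 0. Proof. by apply: Hab; apply: es_a. Qed.
Lemma br_eg s x : br (es s) x = - ph s x. Proof. by rewrite (brA Hbr). Qed.

Lemma exp_g x : x \in g -> x = \sum_i (eta i * gm x (ug i)) *: ug i.
Proof. exact: (exp_onb Hgm Hbu Heta Huu). Qed.
Lemma exp_a x : x \in a -> x = \sum_s (eps s * gm x (es s)) *: es s.
Proof. exact: (exp_onb Hgm Hbe Heps Hee). Qed.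

Definition bV (i : 'I_m + 'I_k) := match i with inl i => tnth u i | inr s => tnth e s end.
Definition sV (i : 'I_m + 'I_k) := match i with inl i => eta i | inr s => eps s end.

Lemma bV_full i : bV i \in fullv. Proof. exact: memvf. Qed.

Lemma exp_V x : x \in fullv -> x = \sum_i (sV i * gm x (bV i)) *: bV i.
Proof.
rewrite -Hfull => /memv_addP [y yg [z za ->]].
rewrite big_sumType /=.
have -> : \sum_i (eta i * gm (y + z) (ug i)) *: ug i = y.
  rewrite {2}(exp_g yg); apply: eq_bigr => i _.
  by rewrite (linRD (gmL Hgm _)) (orth_ag (ug_g i) za) addr0.
have -> : \sum_s (eps s * gm (y + z) (es s)) *: es s = z.
  rewrite {2}(exp_a za); apply: eq_bigr => s _.
  by rewrite (linRD (gmL Hgm _)) (gm_ge s yg) add0r.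
done.
Qed.

Lemma NK X Y W : 2 * gm (Nn X Y) W = K X Y W.
Proof. exact: (nablaK Hbr Hgm bV_full exp_V X Y (memvf W)). Qed.
Lemma DK X Y W : W \in g -> 2 * gm (Dn X Y) W = K X Y W.
Proof. exact: (nablaK Hbr Hgm ug_g exp_g X Y). Qed.
Lemma Dg X Y : Dn X Y \in g.
Proof. exact: (nablaU Hbr Hgm ug_g exp_g X Y). Qed.
Lemma NL Y : linV (fun X => Nn X Y). Proof. exact: (nablaL Hbr Hgm bV_full exp_V). Qed.
Lemma NR X : linV (Nn X). Proof. exact: (nablaR Hbr Hgm bV_full exp_V). Qed.
Lemma DL Y : linV (fun X => Dn X Y). Proof. exact: (nablaL Hbr Hgm ug_g exp_g). Qed.
Lemma DR X : linV (Dn X). Proof. exact: (nablaR Hbr Hgm ug_g exp_g). Qed.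

Lemma half2 (x y : R) : 2 * x = y -> x = y / 2.
Proof. by move=> <-; field. Qed.

Lemma NKh X Y W : gm (Nn X Y) W = K X Y W / 2.
Proof. exact/half2/NK. Qed.
Lemma DKh X Y W : W \in g -> gm (Dn X Y) W = K X Y W / 2.
Proof. by move=> Wg; apply/half2/DK. Qed.
Lemma ND X Y W : W \in g -> gm (Nn X Y) W = gm (Dn X Y) W.
Proof. by move=> Wg; rewrite NKh DKh. Qed.

Lemma K_self X Y : K X Y X = 2 * gm (br X Y) X.
Proof.
rewrite /Kz (brxx Hbr) (linR0 (gmL Hgm _)) (brA Hbr Y) (linRN (gmL Hgm _)).
by rewrite addr0 opprK mulr2n mulrDl mul1r.
Qed.
Lemma N_self X Y : gm (Nn X Y) X = gm (br X Y) X.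
Proof. by rewrite NKh K_self; field. Qed.
Lemma D_self X Y : X \in g -> gm (Dn X Y) X = gm (br X Y) X.
Proof. by move=> Xg; rewrite DKh // K_self; field. Qed.

Definition psi s x := \sum_i (eta i * gm (ph s (ug i)) x) *: ug i.

Lemma psi_g s x : psi s x \in g.
Proof. by apply: rpred_sum => i _; apply: rpredZ; apply: ug_g. Qed.
Lemma psiL s : linV (psi s).
Proof.
move=> c x y; rewrite /psi scaler_sumr -big_split /=; apply: eq_bigr => i _.
by rewrite (gmR Hgm _) scalerA -scalerDl; congr (_ *: _); ring.
Qed.
Lemma psi_adj s v w : v \in g -> gm v (psi s w) = gm (ph s v) w.
Proof.
move=> vg; rewrite /psi (linR_sum (gmR Hgm _)) {2}(exp_g vg).
rewrite (linV_sum (brL Hbr _)) (linR_sum (gmL Hgm _)); apply: eq_bigr => i _.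
rewrite (linRZ (gmR Hgm _)) (linVZ (brL Hbr _)) (linRZ (gmL Hgm _)) (gmC Hgm v).
ring.
Qed.
Lemma psi_adj' s v w : v \in g -> gm (psi s w) v = gm (ph s v) w.
Proof. by move=> vg; rewrite (gmC Hgm) psi_adj. Qed.
Lemma phis_psi s x : x \in g -> phis s x = psi s x.
Proof.
move=> xg; rewrite /psi {1}(exp_g (Hphg s xg)); apply: eq_bigr => i _.
by rewrite Hadj ?ug_g // (gmC Hgm (ug i)).
Qed.
Lemma ph_g s x : x \in g -> ph s x \in g. Proof. exact: br_gl. Qed.
Lemma phL s : linV (fun x => ph s x). Proof. exact: (brL Hbr). Qed.



Lemma ext_fun (F1 F2 : V -> R) : linR F1 -> linR F2 ->
  (forall W, W \in g -> F1 W = F2 W) -> (forall t, F1 (es t) = F2 (es t)) ->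
  forall W, F1 W = F2 W.
Proof.
move=> l1 l2 Hg He W; have : W \in fullv by exact: memvf.
rewrite -Hfull => /memv_addP [y yg [z za ->]].
rewrite (linRD l1) (linRD l2) Hg //; congr (_ + _).
rewrite (exp_a za) (linR_sum l1) (linR_sum l2); apply: eq_bigr => s _.
by rewrite (linRZ l1) (linRZ l2) He.
Qed.

Lemma lin2 Z : linR (fun W => 2 * gm Z W).
Proof. by move=> c x y; rewrite (gmR Hgm Z); ring. Qed.

Lemma N_charac X Y Z : (forall W, W \in g -> 2 * gm Z W = K X Y W) ->
  (forall t, 2 * gm Z (es t) = K X Y (es t)) -> Nn X Y = Z.
Proof.
move=> Hg He; apply: (nabla_uniq Hbr Hgm bV_full exp_V (memvf Z)) => W _.
by apply: (ext_fun (lin2 Z) (KzR Hbr Hgm X Y)).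
Qed.

Definition cc s X Y := gm (ph s X) Y + gm (ph s Y) X.
Definition Ev X Y := \sum_s (eps s * cc s X Y) *: es s.

Lemma gm_Ev_g X Y W : W \in g -> gm (Ev X Y) W = 0.
Proof.
move=> Wg; rewrite (linR_sum (gmL Hgm _)) big1 // => s _.
by rewrite (linRZ (gmL Hgm _)) gm_eg // mulr0.
Qed.
Lemma gm_Ev_e X Y t : gm (Ev X Y) (es t) = cc t X Y.
Proof.
rewrite (linR_sum (gmL Hgm _)).
rewrite (eq_bigr (fun s => (eps s * cc s X Y) * (if s == t then eps s else 0))).
  by rewrite sum_delta mulrAC eps2 mul1r.
by move=> s _; rewrite (linRZ (gmL Hgm _)) Hee.
Qed.

Lemma N1 X Y : X \in g -> Y \in g -> Nn X Y = Dn X Y - 2^-1 *: Ev X Y.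
Proof.
move=> Xg Yg; apply: N_charac => [W Wg|t].
  rewrite (linRB (gmL Hgm _)) (linRZ (gmL Hgm _)) gm_Ev_g // mulr0 subr0.
  exact: DK.
rewrite (linRB (gmL Hgm _)) (linRZ (gmL Hgm _)) gm_Ev_e gm_ge ?Dg // /Kz.
by rewrite gm_ge ?br_gl // br_eg (linRN (gmL Hgm _)) /cc; field.
Qed.

Lemma N2 X s : X \in g -> Nn X (es s) = 2^-1 *: (ph s X + psi s X).
Proof.
move=> Xg; apply: N_charac => [W Wg|t].
  rewrite (linRZ (gmL Hgm _)) (linRD (gmL Hgm _)) psi_adj' // /Kz.
  by rewrite br_eg (linRN (gmL Hgm _)) (gm_ge _ (br_gr _ Xg)); field.
rewrite (linRZ (gmL Hgm _)) (linRD (gmL Hgm _)) !gm_ge ?ph_g ?psi_g // /Kz.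
by rewrite br_ee (linR0 (gmL Hgm _)) gm_ge ?ph_g // gm_ge ?br_gr //; field.
Qed.

Lemma N3 s X : X \in g -> Nn (es s) X = 2^-1 *: (psi s X - ph s X).
Proof.
move=> Xg; apply: N_charac => [W Wg|t].
  rewrite (linRZ (gmL Hgm _)) (linRB (gmL Hgm _)) psi_adj' // /Kz.
  by rewrite br_eg (linRN (gmL Hgm _)) (gm_ge _ (br_gl _ Xg)); field.
rewrite (linRZ (gmL Hgm _)) (linRB (gmL Hgm _)) !gm_ge ?ph_g ?psi_g // /Kz.
by rewrite br_ee (linR0 (gmL Hgm _)) gm_ge ?br_gr // gm_ge ?ph_g //; field.
Qed.

Lemma N4 s r : Nn (es s) (es r) = 0.
Proof.
apply: N_charac => [W Wg|t].
  rewrite (linR0 (gmL Hgm _)) /Kz br_ee (linR0 (gmL Hgm _)).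
  rewrite br_eg (linRN (gmL Hgm _)) gm_ge ?br_gl // gm_ge ?ph_g //.
  by rewrite oppr0 !subr0 addr0 mulr0.
rewrite (linR0 (gmL Hgm _)) /Kz !br_ee !(linR0 (gmL Hgm _)).
by rewrite subr0 addr0 mulr0.
Qed.



Definition Tr (f : V -> V) := \sum_i eta i * gm (f (ug i)) (ug i).

Lemma trg f : linV f -> (forall x, x \in g -> f x \in g) -> vtrace g f = Tr f.
Proof. by move=> lf fg; rewrite (trace_U Hgm ug_g exp_g lf fg). Qed.

Lemma Pars x y : y \in g -> \sum_i eta i * gm x (ug i) * gm y (ug i) = gm x y.
Proof.
move=> yg; rewrite {2}(exp_g yg) (linR_sum (gmR Hgm x)); apply: eq_bigr => i _.
rewrite (linRZ (gmR Hgm _)); ring.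
Qed.

Lemma Tr_exp C D : linV C -> (forall x, x \in g -> D x \in g) ->
  Tr (fun x => C (D x)) =
  \sum_i \sum_j eta i * eta j * gm (D (ug i)) (ug j) * gm (C (ug j)) (ug i).
Proof.
move=> lC Dg; apply: eq_bigr => i _.
rewrite {1}(exp_g (Dg _ (ug_g i))) (linV_sum lC) (linR_sum (gmL Hgm _)) mulr_sumr.
apply: eq_bigr => j _; rewrite (linVZ lC) (linRZ (gmL Hgm _)); ring.
Qed.

Lemma Tr_comm A B : linV A -> linV B -> (forall x, x \in g -> A x \in g) ->
  (forall x, x \in g -> B x \in g) ->
  Tr (fun x => A (B x)) = Tr (fun x => B (A x)).
Proof.
move=> lA lB Ag Bg; rewrite !Tr_exp // exchange_big /=.
by apply: eq_bigr => i _; apply: eq_bigr => j _; ring.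
Qed.

Lemma Tr_sym S : linV S -> (forall x, x \in g -> S x \in g) ->
  (forall x y, x \in g -> y \in g -> gm (S x) y = gm x (S y)) ->
  forall v, \sum_i eta i * gm (br (S (ug i)) (ug i)) v = 0.
Proof.
move=> lS Sg Ssym v.
have E : \sum_i eta i * gm (br (S (ug i)) (ug i)) v =
  \sum_i \sum_j eta i * eta j * gm (S (ug i)) (ug j) * gm (br (ug j) (ug i)) v.
  apply: eq_bigr => i _.
  rewrite {1}(exp_g (Sg _ (ug_g i))) (linV_sum (brL Hbr _)) (linR_sum (gmL Hgm _)).
  rewrite mulr_sumr; apply: eq_bigr => j _.
  rewrite (linVZ (brL Hbr _)) (linRZ (gmL Hgm _)); ring.
rewrite E.
set X := \sum_i _.
suff : X = - X by lra.
rewrite {1}/X exchange_big /= -sumrN; apply: eq_bigr => i _.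
rewrite -sumrN; apply: eq_bigr => j _.
rewrite Ssym ?ug_g // (gmC Hgm (ug j)) (brA Hbr (ug i)) (linRN (gmL Hgm _)).
ring.
Qed.

Lemma Tr_ad y : y \in g -> Tr (fun x => br y x) = 0.
Proof.
move=> yg; rewrite -trg; last by move=> x xg; apply: br_gr.
  have lid : linV (@id V) by [].
  exact: (trace_nil Hbr Hid lid (fun j x xg => xg) Hnil yg).
exact: (brR Hbr).
Qed.

Lemma ph_der s x z : ph s (br x z) = br (ph s x) z + br x (ph s z).
Proof.
have J := brJ Hbr x z (es s).
rewrite (brA Hbr (es s) (br x z)) [br (es s) x](brA Hbr) (linVN (brR Hbr z)) in J.
rewrite (brA Hbr z (ph s x)) opprK in J.
by move/eqP: J; rewrite subr_eq0 => /eqP <-; rewrite addrC.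
Qed.

Lemma Tr_phad s y : y \in g -> Tr (fun x => ph s (br y x)) = 0.
Proof.
move=> yg; rewrite -trg.
- exact: (trace_nil Hbr Hid (phL s) (Cs_D Hbr Hid (phL s) (@ph_g s) (fun x z _ _ => ph_der s x z)) Hnil yg).
- by move=> c x z; rewrite (brR Hbr y) (phL s).
- by move=> x xg; apply/ph_g/br_gr.
Qed.

Lemma ricV_E Y Z : ricci br gm fullv Y Z =
  \sum_i eta i * gm (lc_curv br gm fullv (ug i) Y Z) (ug i) +
  \sum_t eps t * gm (lc_curv br gm fullv (es t) Y Z) (es t).
Proof.
rewrite /ricci (trace_U Hgm bV_full exp_V (curvL Hbr Hgm bV_full exp_V Y Z)).
  by rewrite big_sumType.
by move=> x _; apply: memvf.
Qed.

Lemma ricg_E Y Z : ricci br gm g Y Z =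
  \sum_i eta i * gm (lc_curv br gm g (ug i) Y Z) (ug i).
Proof.
rewrite /ricci (trace_U Hgm ug_g exp_g (curvL Hbr Hgm ug_g exp_g Y Z)) //.
by move=> x _; rewrite /lc_curv !rpredB ?Dg.
Qed.



Lemma N0l Y : Nn 0 Y = 0. Proof. exact: (linV0 (NL Y)). Qed.
Lemma N0r X : Nn X 0 = 0. Proof. exact: (linV0 (NR X)). Qed.
Lemma gm0l y : gm 0 y = 0. Proof. exact: (linR0 (gmL Hgm y)). Qed.
Lemma gm0r y : gm y 0 = 0. Proof. exact: (linR0 (gmR Hgm y)). Qed.
Lemma gmDl x y z : gm (x + y) z = gm x z + gm y z. Proof. exact: (linRD (gmL Hgm z)). Qed.
Lemma gmDr x y z : gm z (x + y) = gm z x + gm z y. Proof. exact: (linRD (gmR Hgm z)). Qed.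
Lemma gmBl x y z : gm (x - y) z = gm x z - gm y z. Proof. exact: (linRB (gmL Hgm z)). Qed.
Lemma gmBr x y z : gm z (x - y) = gm z x - gm z y. Proof. exact: (linRB (gmR Hgm z)). Qed.
Lemma gmNl x z : gm (- x) z = - gm x z. Proof. exact: (linRN (gmL Hgm z)). Qed.
Lemma gmNr x z : gm z (- x) = - gm z x. Proof. exact: (linRN (gmR Hgm z)). Qed.
Lemma gmZl c x z : gm (c *: x) z = c * gm x z. Proof. exact: (linRZ (gmL Hgm z)). Qed.
Lemma gmZr c x z : gm z (c *: x) = c * gm z x. Proof. exact: (linRZ (gmR Hgm z)). Qed.
Lemma phD s x y : ph s (x + y) = ph s x + ph s y. Proof. exact: (linVD (phL s)). Qed.
Lemma phB s x y : ph s (x - y) = ph s x - ph s y. Proof. exact: (linVB (phL s)). Qed.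
Lemma phZ s c x : ph s (c *: x) = c *: ph s x. Proof. exact: (linVZ (phL s)). Qed.
Lemma psiD s x y : psi s (x + y) = psi s x + psi s y. Proof. exact: (linVD (psiL s)). Qed.
Lemma psiB s x y : psi s (x - y) = psi s x - psi s y. Proof. exact: (linVB (psiL s)). Qed.
Lemma psiZ s c x : psi s (c *: x) = c *: psi s x. Proof. exact: (linVZ (psiL s)). Qed.

Lemma case3 s r : ricci br gm fullv (es s) (es r) =
  - 2^-1 * (\sum_i eta i * gm (ph s (ug i)) (ph r (ug i)))
  - 2^-1 * vtrace g (fun v => ph s (ph r v)).
Proof.
rewrite ricV_E [X in _ + X]big1 ?addr0; last first.
  move=> t _; rewrite /lc_curv N4 N0r br_ee N0l N4 N0r.
  by rewrite !subr0 gm0l mulr0.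
rewrite (eq_bigr (fun i =>
   (- 4^-1) * (eta i * gm (ph s (ug i)) (ph r (ug i)))
 + (- (3 / 4)) * (eta i * gm (ph r (ph s (ug i))) (ug i))
 + 4^-1 * (eta i * gm (ph s (ph r (ug i))) (ug i))
 + 4^-1 * (eta i * gm (ph s (psi r (ug i))) (ug i))
 + (- 2^-1) * (eta i * gm (ph r (ug i)) (ph s (ug i))))); last first.
  move=> i _; have ui := ug_g i.
  rewrite /lc_curv N4 N0r (N2 _ ui) (N2 _ (ph_g s ui)) N3; last first.
    by rewrite rpredZ // rpredD ?ph_g ?psi_g.
  rewrite !gmBl !gmZl !gmBl !gmDl gm0l.
  rewrite !psiZ !psiD !phZ !phD !gmZl !gmDl.
  rewrite !psi_adj' ?ph_g ?psi_g //.
  rewrite psi_adj ?ph_g //.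
  by field.
rewrite !big_split /= -!mulr_sumr.
have hM : \sum_i eta i * gm (ph s (psi r (ug i))) (ug i) =
          \sum_i eta i * gm (ph r (ug i)) (ph s (ug i)).
  transitivity (Tr (fun x => ph s (psi r x))); first by [].
  rewrite (@Tr_comm (fun x => ph s x) (psi r) (phL s) (psiL r)
     (fun x xg => ph_g s xg) (fun x _ => psi_g r x)).
  by apply: eq_bigr => i _; rewrite psi_adj' ?ug_g.
have hP : \sum_i eta i * gm (ph r (ug i)) (ph s (ug i)) =
          \sum_i eta i * gm (ph s (ug i)) (ph r (ug i)).
  by apply: eq_bigr => i _; rewrite (gmC Hgm).
have hT : \sum_i eta i * gm (ph r (ph s (ug i))) (ug i) =
          \sum_i eta i * gm (ph s (ph r (ug i))) (ug i).
  transitivity (Tr (fun x => ph r (ph s x))); first by [].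
  exact: (@Tr_comm (fun x => ph r x) (fun x => ph s x) (phL r) (phL s)
     (fun x xg => ph_g r xg) (fun x xg => ph_g s xg)).
rewrite trg; last by move=> x xg; apply/ph_g/ph_g.
  by rewrite /Tr hM hP hT; field.
by move=> c x y /=; rewrite !(phD, phZ).
Qed.



Ltac gt := solve [ assumption | apply: ug_g | apply: psi_g | apply: Dg
  | apply: rpredZ; gt | apply: rpredD; gt | apply: rpredB; gt
  | rewrite rpredN; gt | apply: br_gl; gt | apply: br_gr; gt | apply: rpred0 ].

Definition Sf s x := 2^-1 *: (ph s x + psi s x).
Lemma SfL s : linV (Sf s).
Proof.
move=> c x y; rewrite /Sf phD phZ psiD psiZ scalerA mulrC -scalerA -scalerDr.
by congr (_ *: _); rewrite scalerDr addrACA.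
Qed.
Lemma Sf_g s x : x \in g -> Sf s x \in g. Proof. by move=> xg; rewrite /Sf; gt. Qed.
Lemma Sf_sym s x y : x \in g -> y \in g -> gm (Sf s x) y = gm x (Sf s y).
Proof.
move=> xg yg; rewrite /Sf gmZl gmZr gmDl gmDr psi_adj' // psi_adj //.
by rewrite (gmC Hgm x (ph s y)); field.
Qed.
Lemma SfN s x : Sf s (- x) = - Sf s x. Proof. exact: (linVN (SfL s)). Qed.

Lemma case2 v s : v \in g -> ricci br gm fullv v (es s) =
  2^-1 * (\sum_i eta i * gm (br v (ug i)) (ph s (ug i))).
Proof.
move=> vg.
have N2' X : X \in g -> Nn X (es s) = Sf s X by move=> Xg; rewrite N2.
rewrite ricV_E [X in _ + X]big1 ?addr0; last first.
  move=> t _; rewrite /lc_curv (N2' _ vg) N4 N0r (N2' (br (es t) v)); last by gt.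
  rewrite subr0 gmBl N_self (gm_ge _ (br_gr _ (Sf_g s vg))).
  by rewrite (gm_ge _ (Sf_g s (br_gr _ vg))) subrr mulr0.
rewrite (eq_bigr (fun i =>
   (- 1) * (eta i * gm (br (Sf s v) (ug i)) (ug i))
 + (- 2^-1) * (eta i * gm (br v (Sf s (ug i))) (ug i))
 + 2^-1 * (eta i * gm (br (Sf s (ug i)) (ug i)) v)
 + (3 / 2) * (eta i * gm (Sf s (br v (ug i))) (ug i)))); last first.
  move=> i _; have ui := ug_g i.
  rewrite /lc_curv (N2' _ vg) (N2' _ ui) (N2' (br (ug i) v)); last by gt.
  rewrite !gmBl N_self NKh /Kz.
  have h1 : gm (br (ug i) (Sf s v)) (ug i) = - gm (br (Sf s v) (ug i)) (ug i).
    by rewrite (brA Hbr) gmNl.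
  have h2 : gm (br (ug i) v) (Sf s (ug i)) = - gm (Sf s (br v (ug i))) (ug i).
    rewrite -Sf_sym; try gt; by rewrite (brA Hbr (ug i)) SfN gmNl.
  have h3 : gm (Sf s (br (ug i) v)) (ug i) = - gm (Sf s (br v (ug i))) (ug i).
    by rewrite (brA Hbr) SfN gmNl.
  rewrite h1 h2 h3; by field.
rewrite !big_split /= -!mulr_sumr.
have t1 : \sum_i eta i * gm (br (Sf s v) (ug i)) (ug i) = 0.
  by have := Tr_ad (Sf_g s vg); rewrite /Tr.
have t2 : \sum_i eta i * gm (br (Sf s (ug i)) (ug i)) v = 0.
  apply: (Tr_sym (SfL s) (@Sf_g s)) => x y xg yg; exact: Sf_sym.
have t3 : \sum_i eta i * gm (br v (Sf s (ug i))) (ug i) =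
          \sum_i eta i * gm (Sf s (br v (ug i))) (ug i).
  exact: (@Tr_comm (fun x => br v x) (Sf s) (brR Hbr v) (SfL s)
     (fun x xg => br_gr v xg) (fun x xg => Sf_g s xg)).
have t4 : \sum_i eta i * gm (Sf s (br v (ug i))) (ug i) =
          2^-1 * (\sum_i eta i * gm (br v (ug i)) (ph s (ug i))).
  have z := Tr_phad s vg; rewrite /Tr in z.
  rewrite (eq_bigr (fun i => 2^-1 * (eta i * gm (ph s (br v (ug i))) (ug i))
     + 2^-1 * (eta i * gm (br v (ug i)) (ph s (ug i))))); last first.
    move=> i _; rewrite /Sf gmZl gmDl psi_adj' ?ug_g // (gmC Hgm (ph s (ug i))).
    by field.
  by rewrite big_split /= -!mulr_sumr z mulr0 add0r.
rewrite t1 t2 t3 t4; by field.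
Qed.



Lemma case1_i v w i : v \in g -> w \in g ->
  eta i * gm (lc_curv br gm fullv (ug i) v w) (ug i) =
  eta i * gm (lc_curv br gm g (ug i) v w) (ug i) +
  \sum_s eps s * ((- 2^-1) * cc s v w * (eta i * gm (ph s (ug i)) (ug i))
     + 4^-1 * (eta i * gm (ph s v + psi s v) (ug i) * gm (psi s w + ph s w) (ug i))).
Proof.
move=> vg wg; have ui := ug_g i.
set S1 := \sum_s eps s * cc s v w * gm (ph s (ug i)) (ug i).
set S2 := \sum_s eps s * cc s (ug i) w *
             ((gm (ph s v) (ug i) + gm (ph s (ug i)) v) / 2).
have e1 : gm (Nn (ug i) (Nn v w)) (ug i) =
          gm (Dn (ug i) (Dn v w)) (ug i) - 2^-1 * S1.
  rewrite N_self (N1 vg wg) (linVB (brR Hbr _)) (linVZ (brR Hbr _)) gmBl gmZl.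
  rewrite D_self //; congr (_ - 2^-1 * _).
  rewrite /Ev (linV_sum (brR Hbr _)) (linR_sum (gmL Hgm _)); apply: eq_bigr => s _.
  by rewrite (linVZ (brR Hbr _)) gmZl.
have e2 : gm (Nn v (Nn (ug i) w)) (ug i) =
          gm (Dn v (Dn (ug i) w)) (ug i) - 2^-1 * S2.
  rewrite ND // (N1 ui wg) (linVB (DR v)) (linVZ (DR v)) gmBl gmZl.
  congr (_ - 2^-1 * _).
  rewrite /Ev (linV_sum (DR v)) (linR_sum (gmL Hgm _)); apply: eq_bigr => s _.
  rewrite (linVZ (DR v)) gmZl DKh // /Kz br_eg gmNl (gm_ge _ (br_gl _ ui)).
  by rewrite opprK addr0.
have e3 : gm (Nn (br (ug i) v) w) (ug i) = gm (Dn (br (ug i) v) w) (ug i).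
  exact: ND.
have key : eta i * (2^-1 * S2 - 2^-1 * S1) =
  \sum_s eps s * ((- 2^-1) * cc s v w * (eta i * gm (ph s (ug i)) (ug i))
     + 4^-1 * (eta i * gm (ph s v + psi s v) (ug i) * gm (psi s w + ph s w) (ug i))).
  rewrite /S1 /S2 !mulr_sumr -sumrB mulr_sumr; apply: eq_bigr => s _.
  rewrite !gmDl !psi_adj' // /cc; by field.
rewrite /lc_curv !gmBl e1 e2 e3 -key; by field.
Qed.

Lemma brEv x X Y : br x (Ev X Y) = \sum_s (eps s * cc s X Y) *: br x (es s).
Proof.
rewrite /Ev (linV_sum (brR Hbr _)); apply: eq_bigr => s _.
by rewrite (linVZ (brR Hbr _)).
Qed.

Lemma case1_t v w s : v \in g -> w \in g ->
  gm (lc_curv br gm fullv (es s) v w) (es s) =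
  4^-1 * gm (psi s v) (psi s w) - 4^-1 * gm (ph s (ph s w)) v
  - 4^-1 * gm (ph s (ph s v)) w - 3 / 4 * gm (ph s v) (ph s w).
Proof.
move=> vg wg.
rewrite /lc_curv !gmBl N_self (N1 vg wg) (linVB (brR Hbr _)) (linVZ (brR Hbr _)).
rewrite brEv big1; last by move=> t _; rewrite br_ee scaler0.
rewrite scaler0 subr0 (gm_ge _ (br_gr _ (Dg v w))) (N3 _ wg) !NKh /Kz.
have yg : 2^-1 *: (psi s w - ph s w) \in g by gt.
rewrite (gm_ge _ (br_gl w (br_gr (es s) vg))) (gm_ge _ (br_gr v yg)).
rewrite !br_eg !gmNl !gmNr.
rewrite (linVN (brL Hbr _)) ?opprK ?gmNl.
rewrite !phZ !phB !gmZl !gmZr !gmBl !gmBr.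
have q1 : gm (ph s (psi s w)) v = gm (psi s v) (psi s w).
  by rewrite -psi_adj ?psi_g // (gmC Hgm).
have q2 : gm (ph s v) (psi s w) = gm (ph s (ph s v)) w.
  by rewrite psi_adj ?ph_g.
have q3 : gm (ph s w) (ph s v) = gm (ph s v) (ph s w) by rewrite (gmC Hgm).
rewrite q1 q2 q3; by field.
Qed.



Lemma case1 v w : v \in g -> w \in g ->
  ricci br gm fullv v w = ricci br gm g v w +
  \sum_s (2^-1 * eps s * gm (ph s (psi s v) - psi s (ph s v)) w
          - 2^-1 * eps s * gm (ph s v + psi s v) w * vtrace g (fun x => ph s x)).
Proof.
move=> vg wg; rewrite ricV_E ricg_E (eq_bigr _ (fun i _ => case1_i i vg wg)).
rewrite big_split /= -addrA; congr (_ + _).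
rewrite exchange_big /= -big_split /=; apply: eq_bigr => s _.
rewrite case1_t // -mulr_sumr big_split /= -!mulr_sumr Pars; last by gt.
rewrite trg /Tr; last by move=> x xg; apply: ph_g.
  have q1 : gm (ph s (psi s v)) w = gm (psi s v) (psi s w).
    by rewrite -psi_adj ?psi_g.
  have q2 : gm (psi s (ph s v)) w = gm (ph s v) (ph s w).
    by rewrite psi_adj' // (gmC Hgm).
  have q3 : gm (psi s v) w = gm (ph s w) v by rewrite psi_adj'.
  have q4 : gm (ph s v) (psi s w) = gm (ph s (ph s v)) w by rewrite psi_adj ?ph_g.
  have q5 : gm (psi s v) (ph s w) = gm (ph s (ph s w)) v by rewrite psi_adj' ?ph_g.
  rewrite gmBl q1 q2 !gmDl !gmDr q3 q4 q5 /cc; by field.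
exact: phL.
Qed.

End Main.


Unset Implicit Arguments. Set Strict Implicit.

Theorem proposition1p10 (R : realType) (V : vectType R)
  (br : V -> V -> V) (gm : V -> V -> R) (g a : {vspace V})
  (k : nat) (e : k.-tuple V) (eps : 'I_k -> R)
  (phis : 'I_k -> V -> V)
  (m : nat) (u : m.-tuple V) (eta : 'I_m -> R) :
  is_lie_bracket br -> is_metric gm ->
  solvable_lie br fullv ->
  (* standard decomposition *)
  lie_ideal br g -> nilpotent_lie br g ->
  abelian_subalgebra br a ->
  (g + a)%VS = fullv -> directv (g + a) ->
  (forall v w, v \in g -> w \in a -> gm v w = 0) ->
  (* orthonormal basis e of a *)
  basis_of a e ->
  (forall s, eps s = 1 \/ eps s = -1) ->
  (forall s r, gm (tnth e s) (tnth e r) = if s == r then eps s else 0) ->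
  (* phi_s^* is the adjoint of phi_s = [., e_s] on g *)
  (forall s v, v \in g -> phis s v \in g) ->
  (forall s v w, v \in g -> w \in g ->
     gm (br v (tnth e s)) w = gm v (phis s w)) ->
  (* orthonormal basis u of g, used to define <f,g> on End(g) *)
  basis_of g u ->
  (forall i, eta i = 1 \/ eta i = -1) ->
  (forall i j, gm (tnth u i) (tnth u j) = if i == j then eta i else 0) ->
  let phi := fun (s : 'I_k) (v : V) => br v (tnth e s) in
  let ip := fun (f h : V -> V) =>
    \sum_(i < m) eta i * gm (f (tnth u i)) (h (tnth u i)) in
  [/\ (forall v w, v \in g -> w \in g ->
        ricci br gm fullv v w =
        ricci br gm g v w +
        \sum_(s < k)
          (2^-1 * eps s * gm (phi s (phis s v) - phis s (phi s v)) w
           - 2^-1 * eps s * gm (phi s v + phis s v) w * vtrace g (phi s))),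
      (forall v s, v \in g ->
        ricci br gm fullv v (tnth e s) = 2^-1 * ip (br v) (phi s)) &
      (forall s r,
        ricci br gm fullv (tnth e s) (tnth e r) =
        - 2^-1 * ip (phi s) (phi r) - 2^-1 * vtrace g (fun v => phi s (phi r v)))].
Proof.
move=> Hbr Hgm Hsolv Hid Hnil Hab Hfull Hdir Horth Hbe Heps Hee Hphg Hadj Hbu Heta Huu phi ip.
have PP := phis_psi Hgm Hphg Hadj Hbu Heta Huu.
split.
- move=> v w vg wg.
  rewrite (case1 Hbr Hgm Hid Hab Hfull Horth Hbe Heps Hee Hbu Heta Huu vg wg).
  congr (_ + _); apply: eq_bigr => s _; rewrite /phi /=.
  by rewrite !PP // Hid.
- move=> v s vg.
  by rewrite (case2 Hbr Hgm Hid Hnil Hab Hfull Horth Hbe Heps Hee Hbu Heta Huu s vg).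
- move=> s r.
  by rewrite (case3 Hbr Hgm Hid Hab Hfull Horth Hbe Heps Hee Hbu Heta Huu s r).
Qed.
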